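(* Let $N$ be even and $M_N$ the set of perfect matchings of $\{1,\dots,N\}$, each identified with a fixed-point-free involution $\pi\in S_N$. For $\pi\in M_N$ and $i,j,k\in\{1,\dots,N\}$ define $T_{ijk}(\pi)\in M_N$ as follows: if $|\{i,j,k,\pi(i),\pi(j),\pi(k)\}|<6$ then $T_{ijk}(\pi)=\pi$; otherwise $T_{ijk}(\pi)$ is the perfect matching obtained from $\pi$ by removing the pairs $\{\pi(i),i\},\{j,\pi(j)\},\{k,\pi(k)\}$ and adding the pairs $\{i,j\},\{\pi(j),k\},\{\pi(k),\pi(i)\}$. Let $\pi$ be uniform over $M_N$, let $i\in\{1,\dots,N\}$ be fixed, and let $a,b$ be uniform over $\{1,\dots,N\}\setminus\{i\}$, with $\pi,a,b$ independent. Then $T_{iab}(\pi)$ is uniform over $M_N$, and $(T_{iab}(\pi))(i)=a$ provided that $|\{i,a,b,\pi(i),\pi(a),\pi(b)\}|=6$. *)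

(* Defs.v *)
From mathcomp Require Import all_boot all_order all_fingroup all_algebra.
Set Implicit Arguments. Unset Strict Implicit. Unset Printing Implicit Defensive.

Definition is_matching (N : nat) (p : {perm 'I_N}) : bool :=
  [forall x, (p (p x) == x) && (p x != x)].

Definition matchings (N : nat) : {set {perm 'I_N}} := [set p | is_matching p].

Definition Tfun (N : nat) (p : {perm 'I_N}) (i j k : 'I_N) (x : 'I_N) : 'I_N :=
  if #|[set i; j; k; p i; p j; p k]| < 6 then p x
  else if x == i then j
  else if x == j then i
  else if x == p j then k
  else if x == k then p j
  else if x == p k then p i
  else if x == p i then p k
  else p x.

(* T_{ijk}(p) as a permutation (the map is a bijection in all cases; the
   fallback p of insubd is never used). *)
Definition T (N : nat) (p : {perm 'I_N}) (i j k : 'I_N) : {perm 'I_N} :=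
  insubd p [ffun x => Tfun p i j k x].

(* Sample space of (pi, a, b): pi in M_N, a, b in {1..N} \ {i}, uniform. *)
Definition sample (N : nat) (i : 'I_N) : {set {perm 'I_N} * 'I_N * 'I_N} :=
  [set w | [&& w.1.1 \in matchings N, w.1.2 != i & w.2 != i]].

(* Main.v *)
Require Import Defs.
From mathcomp Require Import all_boot all_order all_fingroup all_algebra.
From mathcomp Require Import ring.
Set Implicit Arguments. Unset Strict Implicit. Unset Printing Implicit Defensive.

Definition genb N (p : {perm 'I_N}) (i a b : 'I_N) := uniq [:: i; a; b; p i; p a; p b].

Lemma card6 N (p : {perm 'I_N}) (i a b : 'I_N) :
  (#|[set i; a; b; p i; p a; p b]| < 6) = ~~ genb p i a b.
Proof.
have -> : [set i; a; b; p i; p a; p b] = [set x in [:: i; a; b; p i; p a; p b]].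
  by apply/setP=> x; rewrite !inE !orbA.
rewrite cardsE /genb.
have := card_size [:: i; a; b; p i; p a; p b].
case: card_uniqP => [-> //|H]; rewrite /= ltnS leq_eqVlt.
by case/orP => [/eqP|] //.
Qed.

Lemma perm_val N (p : {perm 'I_N}) (f : 'I_N -> 'I_N) : injective f ->
  insubd p [ffun x => f x] =1 f.
Proof.
move=> fi x.
rewrite -pvalE insubdK ?ffunE //.
by rewrite unfold_in; apply/injectiveP=> y z; rewrite !ffunE; apply: fi.
Qed.

Section Gen.
Variables (N : nat) (p : {perm 'I_N}) (i a b : 'I_N).
Hypothesis pm : is_matching p.

Lemma pinv x : p (p x) = x.
Proof. by move/forallP: pm => /(_ x) /andP [/eqP]. Qed.
Lemma pne x : p x != x.
Proof. by move/forallP: pm => /(_ x) /andP []. Qed.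
Lemma peq x y : (p x == y) = (x == p y).
Proof. by rewrite -{1}(pinv y) (inj_eq perm_inj). Qed.

Ltac splith := repeat match goal with H : is_true (_ && _) |- _ => case/andP: H => ? ? end.
Ltac simp := repeat (first [ progress rewrite eqxx /=
  | match goal with H : is_true (?u != ?v) |- context[?u == ?v] => rewrite (negbTE H) /= end
  | match goal with H : is_true (?u != ?v) |- context[?v == ?u] => rewrite (eq_sym v u) (negbTE H) /= end
  | progress rewrite pinv | rewrite peq ?pinv /= ]).

Hypothesis g : genb p i a b.

Lemma TfunE x : Tfun p i a b x = if x == i then a else if x == a then i
  else if x == p a then b else if x == b then p a else if x == p b then p i
  else if x == p i then p b else p x.
Proof. by rewrite /Tfun card6 g. Qed.

Lemma Tinv x : Tfun p i a b (Tfun p i a b x) = x /\ Tfun p i a b x != x.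
Proof.
have := g; rewrite /genb /= !inE !negb_or => G; splith.
have := pne i; have := pne a; have := pne b => ? ? ?.
rewrite !TfunE.
have [->|?] := eqVneq x i; first by split; simp.
have [->|?] := eqVneq x a; first by split; simp.
have [->|?] := eqVneq x (p a); first by split; simp.
have [->|?] := eqVneq x b; first by split; simp.
have [->|?] := eqVneq x (p b); first by split; simp.
have [->|?] := eqVneq x (p i); first by split; simp.
split; simp; first done; by rewrite eq_sym pne.
Qed.


Lemma Tval x : T p i a b x = Tfun p i a b x.
Proof.
apply: perm_val; apply: (can_inj (g:=Tfun p i a b)) => y; by case: (Tinv y).
Qed.

Lemma Ti : T p i a b i = a.
Proof. by rewrite Tval TfunE eqxx. Qed.

Lemma recover x : p x = if x == i then p i else if x == a then T p i a b b
  else if x == b then T p i a b (p i) else if x == p i then i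
  else if x == T p i a b b then a else if x == T p i a b (p i) then b
  else T p i a b x.
Proof.
have := g; rewrite /genb /= !inE !negb_or => G; splith.
have := pne i; have := pne a; have := pne b => ? ? ?.
have -> : T p i a b b = p a by rewrite Tval TfunE; simp.
have -> : T p i a b (p i) = p b by rewrite Tval TfunE; simp.
rewrite Tval TfunE.
have [->|?] := eqVneq x i; first by simp.
have [->|?] := eqVneq x a; first by simp.
have [->|?] := eqVneq x (p a); first by simp.
have [->|?] := eqVneq x b; first by simp.
have [->|?] := eqVneq x (p b); first by simp.
have [->|?] := eqVneq x (p i); first by simp.
by simp.
Qed.

Lemma Tmatch : is_matching (T p i a b).
Proof.
apply/forallP=> x; rewrite !Tval; case: (Tinv x) => -> ->; by rewrite eqxx.
Qed.

End Gen.

Lemma Tng N (p : {perm 'I_N}) i a b : ~~ genb p i a b -> T p i a b = p.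
Proof.
move=> ng; have e : Tfun p i a b =1 p by move=> x; rewrite /Tfun card6 ng.
by apply/permP => x; rewrite perm_val ?e //; apply: eq_inj perm_inj (fsym e).
Qed.

Lemma Tmatching N (p : {perm 'I_N}) i a b : is_matching p -> is_matching (T p i a b).
Proof.
move=> pm; case gb: (genb p i a b); first exact: Tmatch.
by rewrite Tng ?gb.
Qed.

Ltac splith := repeat match goal with H : is_true (_ && _) |- _ => case/andP: H => ? ? end.
Ltac simp2 pm := repeat (first [ progress rewrite eqxx /=
  | match goal with H : is_true (?u != ?v) |- context[?u == ?v] => rewrite (negbTE H) /= end
  | match goal with H : is_true (?u != ?v) |- context[?v == ?u] => rewrite (eq_sym v u) (negbTE H) /= end
  | progress rewrite (pinv pm) | rewrite (peq pm) ?(pinv pm) /= ]).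

Definition Phi N (i : 'I_N) (w : {perm 'I_N} * 'I_N * 'I_N) :=
  if genb w.1.1 i w.1.2 w.2 then (T w.1.1 i w.1.2 w.2, w.2, w.1.1 i) else w.

Lemma Phi1 N i (w : {perm 'I_N} * 'I_N * 'I_N) : (Phi i w).1.1 = T w.1.1 i w.1.2 w.2.
Proof. by rewrite /Phi; case: ifP => // /negbT /Tng ->. Qed.

Lemma PhiS N i (w : {perm 'I_N} * 'I_N * 'I_N) : w \in sample i -> Phi i w \in sample i.
Proof.
case: w => [[p a] b]; rewrite /Phi /sample !inE /= => /and3P [pm ai bi].
case: ifP => _ /=; last by rewrite pm ai bi.
by rewrite Tmatching // bi (pne pm).
Qed.

Lemma Phi_inj N i : {in sample i &, injective (@Phi N i)}.
Proof.
move=> [[p1 a1] b1] [[p2 a2] b2]; rewrite /sample !inE /=.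
move=> /and3P [pm1 _ _] /and3P [pm2 _ _]; rewrite /Phi /=.
case g1: (genb p1 i a1 b1); case g2: (genb p2 i a2 b2) => //.
- case=> eT eb ec; subst b2.
  have ea : a1 = a2 by rewrite -(Ti pm1 g1) -(Ti pm2 g2) eT.
  subst a2; congr (_, _, _); apply/permP => x.
  by rewrite (recover pm1 g1) (recover pm2 g2) eT ec.
- case=> e1 e2 e3; move: g2; rewrite /genb -e1 -e2 -e3.
  rewrite (Ti pm1 g1).
  have : genb p1 i a1 b1 by rewrite g1.
  rewrite /genb /= !inE !negb_or => G; splith.
  have := pne pm1 i; have := pne pm1 a1; have := pne pm1 b1 => ? ? ?.
  have -> : T p1 i a1 b1 b1 = p1 a1 by rewrite Tval // TfunE //; simp2 pm1.
  have -> : T p1 i a1 b1 (p1 i) = p1 b1 by rewrite Tval // TfunE //; simp2 pm1.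
  by rewrite /= ?inE; simp2 pm1.
- case=> e1 e2 e3; move: g1; rewrite /genb e1 e2 e3.
  rewrite (Ti pm2 g2).
  have : genb p2 i a2 b2 by rewrite g2.
  rewrite /genb /= !inE !negb_or => G; splith.
  have := pne pm2 i; have := pne pm2 a2; have := pne pm2 b2 => ? ? ?.
  have -> : T p2 i a2 b2 b2 = p2 a2 by rewrite Tval // TfunE //; simp2 pm2.
  have -> : T p2 i a2 b2 (p2 i) = p2 b2 by rewrite Tval // TfunE //; simp2 pm2.
  by rewrite /= ?inE; simp2 pm2.
Qed.

Lemma Phi_onto N (i : 'I_N) : Phi i @: sample i = sample i.
Proof.
apply/eqP; rewrite eqEcard card_in_imset; last exact: Phi_inj.
rewrite leqnn andbT; apply/subsetP => w /imsetP [v vS ->]; exact: PhiS.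
Qed.

Lemma count_fiber N (i : 'I_N) (sigma : {perm 'I_N}) :
  #|[set w in sample i | T w.1.1 i w.1.2 w.2 == sigma]| =
  #|[set w in sample i | w.1.1 == sigma]|.
Proof.
have -> : [set w in sample i | T w.1.1 i w.1.2 w.2 == sigma] =
          [set w in sample i | (Phi i w).1.1 == sigma].
  by apply/setP => w; rewrite !inE Phi1.
have inj : {in [set w in sample i | (Phi i w).1.1 == sigma] &, injective (Phi i)}.
  by move=> x y /setIdP [xs _] /setIdP [ys _]; apply: Phi_inj.
rewrite -(card_in_imset inj).
suff -> : Phi i @: [set w in sample i | (Phi i w).1.1 == sigma] =
          [set w in sample i | w.1.1 == sigma] by [].
apply/setP => w; apply/imsetP/idP.
- case=> v /setIdP [vS e] ->; apply/setIdP; split => //; exact: PhiS.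
- move=> /setIdP [wS e]; move: wS; rewrite -{1}Phi_onto => /imsetP [v vS ev].
  by exists v => //; apply/setIdP; rewrite -ev.
Qed.

Import GRing.Theory Num.Theory.
Local Open Scope ring_scope.

Theorem lemma3p4 (N : nat) (hN : ~~ odd N) (i : 'I_N) :
  (forall sigma : {perm 'I_N}, sigma \in matchings N ->
     (#|[set w in sample i | T w.1.1 i w.1.2 w.2 == sigma]|%:R
        / #|sample i|%:R : rat)
     = 1 / #|matchings N|%:R)
  /\
  (forall (p : {perm 'I_N}) (a b : 'I_N),
     p \in matchings N -> a != i -> b != i ->
     #|[set i; a; b; p i; p a; p b]| = 6%N ->
     T p i a b i = a).
Proof.
split; last first.
  move=> p a b; rewrite inE => pm _ _ c6; apply: Ti => //.
  by rewrite -[genb _ _ _ _]negbK -card6 c6.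
move=> sigma sM.
pose A := [set x : 'I_N | x != i].
have eS : sample i = setX (setX (matchings N) A) A.
  by apply/setP => -[[p a] b]; rewrite /A !inE /= andbA.
have eF : [set w in sample i | w.1.1 == sigma] = setX (setX [set sigma] A) A.
  apply/setP => -[[p a] b]; rewrite /A !inE /=.
  have [->|_] := eqVneq p sigma; last by rewrite andbF. by move: sM; rewrite inE => ->; rewrite andbT.
rewrite count_fiber eF eS !cardsX cards1 mul1n.
have cA : (0 < #|A|)%N.
  have -> : A = [set~ i] by apply/setP => x; rewrite !inE.
  rewrite cardsC1 card_ord.
  have N0 : (0 < N)%N by apply: leq_ltn_trans (ltn_ord i).
  by move: hN N0; case: (N) => [|[|n]].
have cM : (0 < #|matchings N|)%N by apply/card_gt0P; exists sigma.
rewrite natrM; field.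
by rewrite !pnatr_eq0 -!lt0n cA cM.
Qed.
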